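(* Let $\ell\geq 1$ be an integer. There is a constant $\sigma_\ell$ depending only on $\ell$ such that for every integer $s\geq 0$ and every $\mathbf{a}=(a_0,\ldots,a_\ell)\in\mathbb{R}^{\ell+1}$ the matrix $A_{s,\mathbf{a}}\in M_{\ell+1}(\mathbb{R})$ with entries \[ (A_{s,\mathbf{a}})_{ij}=\big((i-1)(\ell+1)+j\big)^{\ell-1}\quad (1\leq i\leq \ell,\ 1\leq j\leq \ell+1),\qquad (A_{s,\mathbf{a}})_{\ell+1,j}=(j-1)^s a_{j-1}\quad (1\leq j\leq \ell+1) \] satisfies \[ \det(A_{s,\mathbf{a}})=\sigma_\ell\sum_{j=0}^{\ell}(-1)^j\binom{\ell}{j} j^s a_j . \]
   Context: The convention $0^0=1$ is used. *)

(* Defs.v *)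
From HB Require Import structures.
From mathcomp Require Import all_boot all_order all_algebra.
From mathcomp Require Import reals.
Set Implicit Arguments. Unset Strict Implicit. Unset Printing Implicit Defensive.
Import Order.TTheory GRing.Theory Num.Theory.
Local Open Scope ring_scope.

(* The matrix A_{s,a} in M_{l+1}(R), with 0-based indices i, j : 'I_(l+1).
   Paper row i+1 <= l, column j+1: ((i)(l+1) + (j+1))^(l-1).
   Last row (i = l): j^s * a_j  (with 0^0 = 1, as x ^+ 0 = 1 in MathComp). *)
Definition Amat (R : realType) (l s : nat) (a : 'I_l.+1 -> R) : 'M[R]_(l.+1) :=
  \matrix_(i < l.+1, j < l.+1)
    if (i < l)%N then ((i * l.+1 + j.+1)%N%:R) ^+ (l.-1)
    else (j%:R) ^+ s * a j.

(* Main.v *)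
Require Import Defs.
From HB Require Import structures.
From mathcomp Require Import all_boot all_order all_algebra.
From mathcomp Require Import reals ring.
Import Order.TTheory GRing.Theory Num.Theory.
Local Open Scope ring_scope.

Lemma altsum {R : comPzRingType} (m l : nat) (c : R) : (m < l)%N ->
  \sum_(j < l.+1) (-1) ^+ j * ('C(l, j))%:R * (c + j%:R) ^+ m = 0.
Proof.
elim: m l c => [|m IH] l c hl.
  have := exprD1n (-1 : R) l; rewrite addNr expr0n; case: l hl => // l _ /= H.
  transitivity (\sum_(i < l.+2) (-1) ^+ i *+ 'C(l.+1, i) : R); last exact: (esym H).
  by apply: eq_bigr => i _; rewrite expr0 mulr1 mulr_natr.
case: l hl => [//|l] hl.
transitivity (c * \sum_(j < l.+2) (-1) ^+ j * ('C(l.+1, j))%:R * (c + j%:R) ^+ m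
   + \sum_(j < l.+2) j%:R * ((-1) ^+ j * ('C(l.+1, j))%:R * (c + j%:R) ^+ m)).
  rewrite mulr_sumr -big_split /=; apply: eq_bigr => i _.
  by rewrite exprS; ring.
rewrite IH ?(ltn_trans _ hl) // mulr0 add0r big_ord_recl /= mul0r add0r.
transitivity (- (l.+1)%:R * \sum_(i < l.+1) (-1) ^+ i * ('C(l, i))%:R * ((c + 1) + i%:R) ^+ m).
  rewrite mulr_sumr; apply: eq_bigr => i _.
  have h := mul_bin_diag l.+1 i; rewrite /= in h.
  have h' : (i.+1%:R * ('C(l.+1, i.+1))%:R : R) = l.+1%:R * ('C(l, i))%:R.
    by rewrite -!natrM h.
  rewrite /bump leq0n add1n exprS -[(c + 1 + i%:R)]addrA -natr1 [(i%:R + 1)]addrC.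
  transitivity ((i.+1%:R * ('C(l.+1, i.+1))%:R) * (- (-1) ^+ i) * (c + (1 + i%:R)) ^+ m).
    rewrite -natr1 [(i%:R + 1)]addrC; ring.
  by rewrite h'; ring.
by rewrite IH // mulr0.
Qed.

Lemma det0_ker {R : fieldType} {n} (M : 'M[R]_n) (u : 'cV[R]_n) :
  u != 0 -> M *m u = 0 -> \det M = 0.
Proof.
move=> hu hM; apply/eqP; apply: contraNT hu => hd.
have hU : M \in unitmx by rewrite unitmxE unitfE.
by rewrite -(mulKmx hU u) hM mulmx0.
Qed.

Definition Bm {R : realType} {l : nat} (x : 'I_l.+1 -> R) : 'M[R]_(l.+1) :=
  \matrix_(i < l.+1, j < l.+1)
    if (i < l)%N then ((i * l.+1 + j.+1)%N%:R) ^+ (l.-1) else x j.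

Definition wv {R : realType} {l : nat} (j : 'I_l.+1) : R := (-1) ^+ j * ('C(l, j))%:R.

Lemma cof_indep {R : realType} {l} (x y : 'I_l.+1 -> R) j :
  cofactor (Bm x) ord_max j = cofactor (Bm y) ord_max j.
Proof.
rewrite /cofactor; congr (_ * \det _); apply/matrixP => k k'.
by rewrite !mxE lift_max /= ltn_ord.
Qed.

Lemma detB {R : realType} {l} (x : 'I_l.+1 -> R) :
  \det (Bm x) = \sum_j x j * cofactor (Bm (fun _ => 0)) ord_max j.
Proof.
rewrite (expand_det_row _ ord_max); apply: eq_bigr => j _.
by rewrite (cof_indep x (fun _ => 0)) mxE /= ltnn.
Qed.

Lemma detB0 {R : realType} {l} (hl : (1 <= l)%N) (y : 'I_l.+1 -> R) :
  \sum_j y j * wv j = 0 -> \det (Bm y) = 0.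
Proof.
move=> hy; apply: (@det0_ker _ _ _ (\col_j wv j)).
  apply/eqP => /matrixP /(_ ord0 ord0); rewrite !mxE /wv /= bin0 mulr1 => /eqP.
  by rewrite oner_eq0.
apply/matrixP => i k; rewrite !mxE.
under eq_bigr do rewrite !mxE.
have [hi|hi] := boolP (i < l)%N; last first.
  exact: hy.
rewrite -[RHS](altsum l.-1 l ((i * l.+1)%N.+1%:R)); last by case: (l) hl.
apply: eq_bigr => j _; rewrite /wv.
by rewrite -natrD addSnnS mulrC.
Qed.

Lemma sum_delta {R : pzRingType} {n} (j : 'I_n) (f : 'I_n -> R) :
  \sum_k (k == j)%:R * f k = f j.
Proof.
rewrite (bigD1 j) //= eqxx mul1r big1 ?addr0 // => k /negbTE ->.
by rewrite mul0r.
Qed.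

Lemma sum_y {R : pzRingType} {n} (j : 'I_n) (c : R) (i0 : 'I_n) (f : 'I_n -> R) :
  \sum_k ((k == j)%:R - c * (k == i0)%:R) * f k = f j - c * f i0.
Proof.
rewrite -(sum_delta j f) -(sum_delta i0 f) mulr_sumr -sumrB.
by apply: eq_bigr => k _; rewrite mulrBl mulrA.
Qed.

Theorem proposition1 (R : realType) (l : nat) (hl : (1 <= l)%N) :
  exists sigma : R, forall (s : nat) (a : 'I_l.+1 -> R),
    \det (Amat s a) =
    sigma * \sum_(j < l.+1) (-1) ^+ j * ('C(l, j))%:R * (j%:R) ^+ s * a j.
Proof.
set C := fun j => cofactor (Bm (fun _ : 'I_l.+1 => (0:R))) ord_max j.
have w0 : wv (ord0 : 'I_l.+1) = 1 :> R by rewrite /wv /= bin0 mulr1.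
have HC : forall j, C j = C ord0 * wv j.
  move=> j.
  pose y := fun k : 'I_l.+1 => ((k == j)%:R - wv j * (k == ord0)%:R : R).
  have := detB0 hl y.
  rewrite detB sum_y sum_y w0 mulr1 subrr => /(_ erefl) /eqP.
  by rewrite subr_eq0 mulrC => /eqP.
exists (C ord0) => s a.
have -> : Amat s a = Bm (fun j => (j%:R) ^+ s * a j) by [].
rewrite detB mulr_sumr; apply: eq_bigr => j _.
rewrite -/(C j) HC /wv; ring.
Qed.
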